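(* Let $s\ge1$ and $N\ge1$ be integers, $f_s(z)=z^s$, knots $z_k=-1+\frac{2k}{N}$ ($k=0,\dots,N$), and let $g$ be the continuous piecewise-linear function on $[-1,1]$ interpolating $f_s$ at these knots. Then \[ \sup_{z\in[-1,1]}|f_s(z)-g(z)|\ \le\ \frac{s(s-1)}{2N^2}. \] Moreover, there exist $M\le N+1$ and reals $a_i,b_i,c_i$ ($i=1,\dots,M$) with $|a_i|\le1$, $|b_i|\le1$ and $|c_i|\le\max\{s+\frac12,\ \frac{2s(s-1)}{N}\}$ such that $g(z)=\sum_{i=1}^M c_i\,\mathrm{ReLU}(a_iz-b_i)$ for all $z\in[-1,1]$. In particular, for $\varepsilon>0$, choosing $N\ge\max\{1,\lceil\sqrt{s(s-1)/(2\varepsilon)}\rceil\}$ ensures $\sup_{z\in[-1,1]}|f_s(z)-g(z)|\le\varepsilon$, so $M=O(s/\sqrt\varepsilon)$ ReLU units suffice for accuracy $\varepsilon$.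
   Context: $\mathrm{ReLU}(t)=\max\{0,t\}$. *)

(* Defs.v *)
From mathcomp Require Import all_boot all_order all_algebra.
From mathcomp Require Import reals.
Set Implicit Arguments. Unset Strict Implicit. Unset Printing Implicit Defensive.
Import Order.TTheory GRing.Theory Num.Theory.
Local Open Scope ring_scope.

Definition relu {R : realType} (t : R) : R := Num.max 0 t.

Definition knot {R : realType} (N k : nat) : R := -1 + 2 * k%:R / N%:R.

Definition knot_index {R : realType} (N : nat) (z : R) : nat :=
  minn (Num.truncn ((z + 1) * N%:R / 2)) (N - 1).

Definition pl_interp {R : realType} (N : nat) (f : R -> R) (z : R) : R :=
  let k := knot_index N z in
  f (knot N k) + (f (knot N k.+1) - f (knot N k)) / (knot N k.+1 - knot N k)
                 * (z - knot N k).

(* Main.v *)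
Require Import Defs.
From mathcomp Require Import all_boot all_order all_algebra.
From mathcomp Require Import reals ring lra.
Import Order.TTheory GRing.Theory Num.Theory.
Local Open Scope ring_scope.

Fixpoint Pp {R : realType} (n : nat) (x y : R) : R :=
  if n is m.+1 then x ^+ m + y * Pp m x y else 0.

Lemma PpE {R : realType} n (x y : R) : x ^+ n - y ^+ n = (x - y) * Pp n x y.
Proof.
elim: n => [|n IH] /=; first by rewrite !expr0 subrr mulr0.
rewrite mulrDr mulrCA -IH !exprS; ring.
Qed.

Lemma Pp_bound {R : realType} n (x y : R) :
  `|x| <= 1 -> `|y| <= 1 -> `|Pp n x y| <= n%:R.
Proof.
move=> hx hy; elim: n => [|n IH] /=; first by rewrite normr0.
apply: le_trans (ler_normD _ _) _.
rewrite -natr1 addrC lerD //; last by rewrite normrX exprn_ile1.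
rewrite normrM -[X in _ <= X]mul1r ler_pM //.
Qed.

Lemma Pp_diff {R : realType} n (x y u : R) :
  `|x| <= 1 -> `|y| <= 1 -> `|u| <= 1 ->
  exists Q, Pp n x u - Pp n y u = (x - y) * Q /\
            `|Q| <= n%:R * (n%:R - 1) / 2.
Proof.
move=> hx hy hu; elim: n => [|n [Q [EQ HQ]]].
  by exists 0; rewrite /= subrr mulr0 normr0 !mul0r.
exists (Pp n x y + u * Q); split.
  have -> : Pp n.+1 x u - Pp n.+1 y u =
     (x ^+ n - y ^+ n) + u * (Pp n x u - Pp n y u) by rewrite /=; ring.
  by rewrite PpE EQ; ring.
apply: le_trans (ler_normD _ _) _.
have h1 := Pp_bound n x y hx hy.
have h2 : `|u * Q| <= n%:R * (n%:R - 1) / 2.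
  rewrite normrM; apply: le_trans (ler_wpM2r (normr_ge0 Q) hu) _.
  by rewrite mul1r.
have -> : (n.+1)%:R * ((n.+1)%:R - 1) / 2 = n%:R + n%:R * (n%:R - 1) / 2 :> R.
  by rewrite -natr1; field.
exact: lerD h1 h2.
Qed.

Lemma knotE {R : realType} N k : knot N k = -1 + k%:R * (2 / N%:R) :> R.
Proof. by rewrite /knot mulrA [2 * _]mulrC. Qed.

Lemma hpos {R : realType} N : (1 <= N)%N -> 0 < 2 / N%:R :> R.
Proof. by move=> hN; rewrite divr_gt0 // ltr0n. Qed.

Lemma knot_le {R : realType} N j k : (1 <= N)%N -> (j <= k)%N ->
  knot N j <= knot N k :> R.
Proof.
move=> hN hjk; rewrite !knotE lerD2l ler_wpM2r ?ler_nat //.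
exact: ltW (hpos _ hN).
Qed.

Lemma knot0 {R : realType} N : knot N 0 = -1 :> R.
Proof. by rewrite knotE mul0r addr0. Qed.

Lemma knotN {R : realType} N : (1 <= N)%N -> knot N N = 1 :> R.
Proof.
move=> hN; rewrite /knot mulfK ?pnatr_eq0 -?lt0n //; lra.
Qed.

Lemma knot_bound {R : realType} N k : (1 <= N)%N -> (k <= N)%N ->
  `|knot N k| <= 1 :> R.
Proof.
move=> hN hk; rewrite ler_norml; apply/andP; split.
  by rewrite -(knot0 N) knot_le.
by rewrite -(@knotN R N hN) knot_le.
Qed.

Lemma knotS {R : realType} N k : (1 <= N)%N ->
  knot N k.+1 - knot N k = 2 / N%:R :> R.
Proof. move=> hN; rewrite !knotE -natr1; ring. Qed.

Lemma knot_idx {R : realType} N (z : R) : (1 <= N)%N -> -1 <= z <= 1 ->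
  (knot_index N z < N)%N /\ knot N (knot_index N z) <= z <= knot N (knot_index N z).+1.
Proof.
move=> hN /andP[z1 z2].
have n0 : (N%:R : R) != 0 by rewrite pnatr_eq0 -lt0n.
have hp := @hpos R N hN.
set t := (z + 1) * N%:R / 2.
have t0 : 0 <= t by rewrite /t !mulr_ge0 // ?invr_ge0 ?ler0n //; lra.
have zt : z = -1 + t * (2 / N%:R) by rewrite /t; field.
have key : forall k, knot N k <= z = (k%:R <= t).
  by move=> k; rewrite knotE zt lerD2l ler_pM2r.
have key2 : forall k, z <= knot N k = (t <= k%:R).
  by move=> k; rewrite knotE zt lerD2l ler_pM2r.
have tN : t <= N%:R by rewrite -key2 knotN.
have /andP[T1 T2] := truncn_itv t0.
rewrite /knot_index -/t.
set T := minn _ _.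
case: (leqP (Num.truncn t) (N - 1)) => hT.
  have -> : T = Num.truncn t by rewrite /T; exact/minn_idPl.
  rewrite key key2 T1 (ltW T2); split => //.
  by apply: leq_ltn_trans hT _; rewrite subn1 prednK.
have -> : T = (N - 1)%N by rewrite /T; exact/minn_idPr/ltnW.
rewrite subn1 prednK // key2 tN andbT; split.
  by [].
rewrite key; apply: le_trans T1; rewrite ler_nat -subn1; exact: ltnW.
Qed.

Definition slope {R : realType} N s k : R :=
  ((knot N k.+1) ^+ s - (knot N k) ^+ s) / (knot N k.+1 - knot N k).

Lemma pl_interpE {R : realType} N s (z : R) :
  pl_interp N (fun x : R => x ^+ s) z =
  knot N (knot_index N z) ^+ s + slope N s (knot_index N z) * (z - knot N (knot_index N z)).
Proof. by []. Qed.

Lemma knotS_neq0 {R : realType} N k : (1 <= N)%N -> knot N k.+1 - knot N k != 0 :> R.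
Proof. by move=> hN; rewrite knotS // gt_eqF // hpos. Qed.

Lemma slopeP1 {R : realType} N s k : (1 <= N)%N ->
  slope N s k = Pp s (knot N k.+1) (knot N k) :> R.
Proof. by move=> hN; rewrite /slope PpE mulrAC divff ?mul1r // knotS_neq0. Qed.

Lemma slopeP2 {R : realType} N s k : (1 <= N)%N ->
  slope N s k = Pp s (knot N k) (knot N k.+1) :> R.
Proof.
move=> hN; rewrite /slope.
have -> : knot N k.+1 ^+ s - knot N k ^+ s =
   (knot N k.+1 - knot N k) * Pp s (knot N k) (knot N k.+1) :> R.
  by have := PpE s (knot N k : R) (knot N k.+1) => E; rewrite -[LHS]opprK -opprB E; ring.
by rewrite mulrAC divff ?mul1r // knotS_neq0.
Qed.

Definition cc {R : realType} N s (j : nat) : R :=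
  if j is j'.+1 then slope N s j'.+1 - slope N s j' else slope N s 0.

Lemma Ssum {R : realType} N s (z : R) k : (1 <= N)%N -> (k < N)%N ->
  (-1) ^+ s + \sum_(0 <= j < k.+1) cc N s j * (z - knot N j) =
  knot N k ^+ s + slope N s k * (z - knot N k).
Proof.
move=> hN; elim: k => [|k IH] hk.
  by rewrite big_nat1 /= knot0.
rewrite big_nat_recr //= addrA IH ?(ltnW hk) //.
have E : knot N k.+1 ^+ s = knot N k ^+ s + slope N s k * (knot N k.+1 - knot N k) :> R.
  by rewrite /slope divfK ?knotS_neq0 //; ring.
rewrite E; ring.
Qed.

Lemma err_bound {R : realType} (s N : nat) (hN : (1 <= N)%N) (z : R) :
  -1 <= z <= 1 ->
  `| z ^+ s - pl_interp N (fun x : R => x ^+ s) z| <= s%:R * (s%:R - 1) / (2 * N%:R ^+ 2).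
Proof.
move=> hz; have [hk /andP[zu zv]] := knot_idx N z hN hz.
rewrite pl_interpE slopeP1 //.
set k := knot_index N z in hk zu zv *.
set u := knot N k in zu *; set v := knot N k.+1 in zv *.
have hu : `|u| <= 1 by apply: knot_bound => //; exact: ltnW.
have hv : `|v| <= 1 by apply: knot_bound.
have hzz : `|z| <= 1 by rewrite ler_norml.
have [Q [EQ HQ]] := Pp_diff s z v u hzz hv hu.
have -> : z ^+ s - (u ^+ s + Pp s v u * (z - u)) = (z ^+ s - u ^+ s) - Pp s v u * (z - u) by ring.
rewrite PpE.
have -> : (z - u) * Pp s z u - Pp s v u * (z - u) = (z - u) * (Pp s z u - Pp s v u) by ring.
rewrite EQ mulrA normrM.
pose h : R := 2 / N%:R.
have hvu : v = u + h by rewrite /h -(@knotS R N k hN) /v /u; ring.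
have B1 : `|(z - u) * (z - v)| <= h ^+ 2 / 4.
  rewrite ler_norml hvu; rewrite hvu in zv; have H1 : 0 <= (z - u - h / 2) ^+ 2 := sqr_ge0 _.
  have H2 : 0 <= (z - u) * (u + h - z) by apply: mulr_ge0; rewrite subr_ge0.
  have H3 : 0 <= h ^+ 2 := sqr_ge0 _.
  apply/andP; split; nra.
apply: le_trans (ler_pM (normr_ge0 _) (normr_ge0 _) B1 HQ) _.
have n0 : (N%:R : R) != 0 by rewrite pnatr_eq0 -lt0n.
have -> : h ^+ 2 / 4 * (s%:R * (s%:R - 1) / 2) = s%:R * (s%:R - 1) / (2 * N%:R ^+ 2) :> R.
  by rewrite /h; field.
by [].
Qed.

Definition ca {R : realType} N s (i : nat) : R :=
  if i is j.+1 then cc N s j else (-1) ^+ s.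
Definition aa {R : realType} (i : nat) : R := if i is _.+1 then 1 else 0.
Definition bb {R : realType} N (i : nat) : R := if i is j.+1 then knot N j else -1.

Theorem mainTheorem17 (R : realType) (s N : nat) (hs : (1 <= s)%N) (hN : (1 <= N)%N) :
  let g := pl_interp N (fun x : R => x ^+ s) in
  (forall z : R, -1 <= z <= 1 ->
     `| z ^+ s - g z | <= s%:R * (s%:R - 1) / (2 * N%:R ^+ 2))
  /\
  (exists (M : nat) (a b c : 'I_M -> R),
     [/\ (M <= N.+1)%N,
         forall i, `| a i | <= 1,
         forall i, `| b i | <= 1,
         forall i, `| c i | <= Num.max (s%:R + 1 / 2) (2 * s%:R * (s%:R - 1) / N%:R)
       & forall z : R, -1 <= z <= 1 ->
           g z = \sum_(i < M) c i * relu (a i * z - b i)])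
  /\
  (forall eps : R, 0 < eps ->
     (Num.ceil (Num.sqrt (s%:R * (s%:R - 1) / (2 * eps))) <= N%:~R :> int) ->
     forall z : R, -1 <= z <= 1 -> `| z ^+ s - g z | <= eps).
Proof.
move=> g.
have P1 : forall z : R, -1 <= z <= 1 ->
     `| z ^+ s - g z | <= s%:R * (s%:R - 1) / (2 * N%:R ^+ 2).
  by move=> z hz; exact: err_bound.
have n0 : (N%:R : R) != 0 by rewrite pnatr_eq0 -lt0n.
have s1 : (1 : R) <= s%:R by rewrite ler1n.
split => //; split; last first.
  move=> eps he hc z hz; apply: le_trans (P1 z hz) _.
  set X := s%:R * (s%:R - 1) / (2 * eps).
  have X0 : 0 <= X by rewrite /X !mulr_ge0 // ?invr_ge0; lra.
  have hc2 := hc; rewrite ceil_le_int in hc2.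
  have hc3 : Num.sqrt X <= N%:R by move: hc2; rewrite intz => h; exact: h.
  have hX : X <= N%:R ^+ 2.
    rewrite -(sqr_sqrtr X0) !expr2; exact: (ler_pM (sqrtr_ge0 _) (sqrtr_ge0 _) hc3 hc3).
  have Np : 0 < 2 * N%:R ^+ 2 :> R by rewrite mulr_gt0 // exprn_gt0 // ltr0n.
  rewrite ler_pdivrMr //.
  rewrite /X ler_pdivrMr ?mulr_gt0 // in hX.
  have -> : eps * (2 * N%:R ^+ 2) = N%:R ^+ 2 * (2 * eps) by ring.
  exact: hX.
exists N.+1, (fun i => aa i), (fun i => bb N i), (fun i => ca N s i).
split => //.
- by case=> [[|j] hj] /=; rewrite ?normr0 ?normr1.
- case=> [[|j] hj] /=; first by rewrite normrN normr1.
  by apply: (knot_bound N j hN); rewrite ltnS in hj; exact: ltnW.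
- case=> [[|j] hj] /=.
    rewrite normrX normrN normr1 expr1n le_max; apply/orP; left; lra.
  rewrite le_max; apply/orP; case: j hj => [|j] hj /=.
    left; rewrite slopeP1 //; apply: le_trans (Pp_bound _ _ _ _ _) _.
    + by apply: knot_bound.
    + by apply: knot_bound.
    + lra.
  have hj2 : (j.+2 <= N)%N := hj.
  right; rewrite (slopeP1 _ _ _ hN) (slopeP2 _ _ _ hN).
  have [Q [EQ HQ]] := Pp_diff s (knot N j.+2 : R) (knot N j) (knot N j.+1)
     (knot_bound _ _ hN hj2) (knot_bound _ _ hN (ltnW (ltnW hj2))) (knot_bound _ _ hN (ltnW hj2)).
  rewrite EQ normrM.
  have -> : knot N j.+2 - knot N j = 2 * (2 / N%:R) :> R.
    by rewrite -[knot N j.+2](subrK (knot N j.+1)) knotS // -addrA knotS //; ring.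
  have h0 : 0 <= 2 * (2 / N%:R) :> R by rewrite mulr_ge0 // ltW // hpos.
  rewrite ger0_norm //.
  apply: le_trans (ler_wpM2l h0 HQ) _.
  rewrite le_eqVlt; apply/orP; left; apply/eqP; field; exact: n0.
move=> z hz; have [hk /andP[zu zv]] := knot_idx N z hN hz.
rewrite /g pl_interpE big_ord_recl /=.
set k := knot_index N z in hk zu zv *.
have -> : \sum_(i < N) ca N s (lift ord0 i) * relu (aa (lift ord0 i) * z - bb N (lift ord0 i))
   = \sum_(0 <= i < N) cc N s i * relu (z - knot N i).
  rewrite big_mkord; apply: eq_bigr => i _; by rewrite lift0 /= mul1r.
rewrite (@big_cat_nat _ _ _ k.+1 0 N) //=.
have -> : \sum_(k.+1 <= i < N) cc N s i * relu (z - knot N i) = 0.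
  rewrite big_nat_cond big1 // => j /andP[/andP[hj1 hj2] _].
  rewrite /relu max_l ?mulr0 // subr_le0.
  exact: le_trans zv (knot_le _ _ _ hN hj1).
rewrite addr0.
rewrite (eq_big_nat _ _ (F2 := fun j => cc N s j * (z - knot N j))); last first.
  move=> j /andP[_ hj]; rewrite /relu max_r // subr_ge0.
  rewrite ltnS in hj; exact: le_trans (knot_le _ _ _ hN hj) zu.
rewrite /relu mul0r sub0r opprK max_r ?ler01 // mulr1.
by rewrite Ssum.
Qed.
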